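(* For every integer $t\ge0$, \begin{align*} \kappa_2(2t+1)&=\tfrac{\kappa_2(t)+\kappa_2(t+1)}2+1;\\ \kappa_3(2t+1)&=\tfrac{\kappa_3(t)+\kappa_3(t+1)}2+\tfrac32\bigl(\kappa_2(t)-\kappa_2(t+1)\bigr);\\ \kappa_4(2t+1)&=\tfrac{\kappa_4(t)+\kappa_4(t+1)}2+2\bigl(\kappa_3(t)-\kappa_3(t+1)\bigr)+\tfrac34\bigl(\kappa_2(t)-\kappa_2(t+1)\bigr)^2-2;\\ \kappa_5(2t+1)&=\tfrac{\kappa_5(t)+\kappa_5(t+1)}2+\tfrac52\bigl(\kappa_4(t)-\kappa_4(t+1)\bigr)+\tfrac52\bigl(\kappa_2(t)-\kappa_2(t+1)\bigr)\bigl(\kappa_3(t)-\kappa_3(t+1)\bigr)-10\bigl(\kappa_2(t)-\kappa_2(t+1)\bigr). \end{align*} In particular, $\kappa_2(1)=2$, $\kappa_3(1)=-6$, $\kappa_4(1)=26$, $\kappa_5(1)=-150$.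
   Context: $s(n)$ is the number of $1$s in the binary expansion of $n\ge0$. For integers $j$ and $t\ge0$, $\delta(j,t)=\lim_{N\to\infty}\frac1N|\{0\le n<N: s(n+t)-s(n)=j\}|$; for each $t$ these form a probability distribution on $\mathbb Z$ with finite support bounded above and exponentially decaying tail. Let $\gamma_t(\vartheta)=\sum_{j\in\mathbb Z}\delta(j,t)e^{2\pi i j\vartheta}$. The cumulants $\kappa_j(t)$ ($j\ge0$) are the real numbers defined by $\log\gamma_t(\vartheta)=\sum_{j\ge0}\frac{\kappa_j(t)}{j!}(2\pi i\vartheta)^j$ for complex $\vartheta$ in a neighbourhood of $0$ (i.e. the cumulants of the distribution $\delta(\cdot,t)$); in particular $\kappa_j(0)=0$ for all $j$. *)

(* Defs.v *)
From Stdlib Require Import Reals ZArith List.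
From Coquelicot Require Import Coquelicot.
Open Scope R_scope.

Fixpoint pos_popcount (p : positive) : nat :=
  match p with
  | xH => 1%nat
  | xO q => pos_popcount q
  | xI q => S (pos_popcount q)
  end.

Definition s (n : nat) : nat :=
  match N.of_nat n with
  | N0 => 0%nat
  | Npos p => pos_popcount p
  end.

Definition count_diff (j : Z) (t N : nat) : nat :=
  length (filter (fun n => Z.eqb (Z.of_nat (s (n + t)) - Z.of_nat (s n))%Z j)
                 (seq 0 N)).

Definition delta (j : Z) (t : nat) : R :=
  real (Lim_seq (fun N => INR (count_diff j t N) / INR N)).

Definition zsum (f : Z -> R) : R :=
  Series (fun n => f (Z.of_nat n)) + Series (fun n => f (- Z.of_nat (S n))%Z).

(* Moment generating function x |-> sum_j delta(j,t) e^{j x}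
   = gamma_t(x / (2 pi i)). *)
Definition mgf (t : nat) (x : R) : R :=
  zsum (fun j => delta j t * exp (IZR j * x)).

(* Cumulants: log gamma_t(theta) = sum_k kappa_k(t)/k! (2 pi i theta)^k,
   i.e. kappa_k(t) is the k-th derivative at 0 of x |-> log mgf t x. *)
Definition kappa (k t : nat) : R :=
  Derive_n (fun x => ln (mgf t x)) k 0.

(* Main.v *)
Require Import Defs.
From Stdlib Require Import Reals ZArith List Lia Lra NArith FunctionalExtensionality.
From Coquelicot Require Import Coquelicot.
Open Scope R_scope.


Lemma Dn_S (f : R -> R) n x : Derive_n f (S n) x = Derive_n (Derive f) n x.
Proof.
  transitivity (Derive_n (Derive_n f 1) n x).
  rewrite Derive_n_comp, Nat.add_1_r; reflexivity. reflexivity.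
Qed.

Lemma Dn_eqD (D : R -> Prop) (u v : R -> R) :
  open D -> (forall y, D y -> u y = v y) ->
  forall k y, D y -> Derive_n u k y = Derive_n v k y.
Proof.
  intros HD Huv k y Hy. apply Derive_n_ext_loc.
  apply (filter_imp D). intros z Hz; auto. apply HD; auto.
Qed.

Lemma Dn_loc (D : R -> Prop) (u v : R -> R) :
  open D -> (forall y, D y -> u y = v y) ->
  forall k x, D x -> locally x (fun y => Derive_n u k y = Derive_n v k y).
Proof.
  intros HD Huv k x Hx. apply (filter_imp D). intros z Hz.
  apply (Dn_eqD D); auto. apply HD; auto.
Qed.

Lemma ex_derive_loc (D : R -> Prop) (u v : R -> R) x :
  open D -> D x -> (forall y, D y -> u y = v y) -> ex_derive u x -> ex_derive v x.
Proof.
  intros HD Hx Huv H. apply (ex_derive_ext_loc u v); auto.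
  apply (filter_imp D). intros; auto. apply HD; auto.
Qed.

Definition Cn (D : R -> Prop) (n : nat) (f : R -> R) :=
  forall k x, (k <= n)%nat -> D x -> ex_derive (Derive_n f k) x.

Definition Smooth (D : R -> Prop) (f : R -> R) := forall n, Cn D n f.

Lemma Cn_weaken D n m f : (m <= n)%nat -> Cn D n f -> Cn D m f.
Proof. intros Hmn H k x Hk Hx. apply H; auto; lia. Qed.

Lemma Cn_derive D n f : Cn D (S n) f -> Cn D n (Derive f).
Proof.
  intros H k x Hk Hx. apply (ex_derive_ext (Derive_n f (S k))).
  intros; apply Dn_S. apply H; auto; lia.
Qed.

Lemma Cn_ext D n u v : open D -> (forall y, D y -> u y = v y) -> Cn D n u -> Cn D n v.
Proof.
  intros HD Huv H k x Hk Hx. apply (ex_derive_loc D (Derive_n u k)); auto.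
  intros; apply (Dn_eqD D); auto.
Qed.

Lemma Cn_plus_eq D n f g : open D -> Cn D n f -> Cn D n g ->
  forall k y, (k <= S n)%nat -> D y ->
  Derive_n (fun z => f z + g z) k y = Derive_n f k y + Derive_n g k y.
Proof.
  intros HD Hf Hg k y Hk Hy. apply Derive_n_plus.
  - apply (filter_imp D). intros z Hz j Hj. destruct j; simpl; auto.
    apply Hf; auto; lia. apply HD; auto.
  - apply (filter_imp D). intros z Hz j Hj. destruct j; simpl; auto.
    apply Hg; auto; lia. apply HD; auto.
Qed.

Lemma Cn_plus D n f g : open D -> Cn D n f -> Cn D n g -> Cn D n (fun z => f z + g z).
Proof.
  intros HD Hf Hg k x Hk Hx.
  apply (ex_derive_loc D (fun y => Derive_n f k y + Derive_n g k y)); auto.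
  intros y Hy. symmetry. apply (Cn_plus_eq D n); auto.
  apply (ex_derive_plus (Derive_n f k) (Derive_n g k)); [apply Hf | apply Hg]; auto.
Qed.

Lemma Derive_mult_D D f g : Cn D 0 f -> Cn D 0 g -> forall y, D y ->
  Derive (fun z => f z * g z) y = Derive f y * g y + f y * Derive g y.
Proof.
  intros Hf Hg y Hy. apply Derive_mult; [apply (Hf 0%nat) | apply (Hg 0%nat)]; auto.
Qed.

Lemma Cn_mult_aux D : open D -> forall n f g, Cn D n f -> Cn D n g ->
  Cn D n (fun z => f z * g z) /\
  (forall k y, (k <= n)%nat -> D y ->
     Derive_n (fun z => f z * g z) (S k) y =
     Derive_n (fun z => Derive f z * g z) k y + Derive_n (fun z => f z * Derive g z) k y).
Proof.
  intros HD n. induction n as [|n IH]; intros f g Hf Hg.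
  - split.
    + intros k x Hk Hx. assert (k = 0%nat) by lia. subst. simpl.
      apply ex_derive_mult; [apply (Hf 0%nat) | apply (Hg 0%nat)]; auto.
    + intros k y Hk Hy. assert (k = 0%nat) by lia. subst. simpl.
      apply (Derive_mult_D D); auto.
  - assert (Hf0 : Cn D 0 f) by (apply (Cn_weaken D (S n)); auto; lia).
    assert (Hg0 : Cn D 0 g) by (apply (Cn_weaken D (S n)); auto; lia).
    assert (Hfn : Cn D n f) by (apply (Cn_weaken D (S n)); auto).
    assert (Hgn : Cn D n g) by (apply (Cn_weaken D (S n)); auto).
    destruct (IH (Derive f) g (Cn_derive D n f Hf) Hgn) as [H1 _].
    destruct (IH f (Derive g) Hfn (Cn_derive D n g Hg)) as [H2 _].
    assert (Heq : forall k y, (k <= S n)%nat -> D y ->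
     Derive_n (fun z => f z * g z) (S k) y =
     Derive_n (fun z => Derive f z * g z) k y + Derive_n (fun z => f z * Derive g z) k y).
    { intros k y Hk Hy. rewrite Dn_S.
      rewrite (Dn_eqD D (Derive (fun z => f z * g z))
                 (fun z => Derive f z * g z + f z * Derive g z)); auto.
      apply (Cn_plus_eq D n); auto.
      intros; apply (Derive_mult_D D); auto. }
    split; auto.
    intros k x Hk Hx. destruct k as [|k].
    + simpl. apply ex_derive_mult; [apply (Hf 0%nat) | apply (Hg 0%nat)]; auto.
    + apply (ex_derive_loc D (fun y => Derive_n (fun z => Derive f z * g z) k y +
                                       Derive_n (fun z => f z * Derive g z) k y)); auto.
      intros y Hy; symmetry; apply Heq; auto; lia.
      apply (ex_derive_plus (Derive_n (fun z => Derive f z * g z) k)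
                            (Derive_n (fun z => f z * Derive g z) k)).
      apply H1; auto; lia. apply H2; auto; lia.
Qed.

Lemma Cn_mult D n f g : open D -> Cn D n f -> Cn D n g -> Cn D n (fun z => f z * g z).
Proof. intros HD Hf Hg. apply (Cn_mult_aux D HD n f g Hf Hg). Qed.

Lemma Cn_comp Dh D : open Dh -> open D -> forall n h f,
  (forall x, D x -> Dh (f x)) -> Cn Dh n h -> Cn D n f -> Cn D n (fun x => h (f x)).
Proof.
  intros HDh HD n. induction n as [|n IH]; intros h f Hmap Hh Hf k x Hk Hx.
  - assert (k = 0%nat) by lia. subst. simpl.
    apply ex_derive_comp. apply (Hh 0%nat); auto. apply (Hf 0%nat); auto.
  - destruct k as [|k].
    + simpl. apply ex_derive_comp. apply (Hh 0%nat); auto; lia. apply (Hf 0%nat); auto; lia.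
    + apply (ex_derive_ext (Derive_n (Derive (fun x => h (f x))) k)).
      intros; symmetry; apply Dn_S.
      apply (ex_derive_loc D (Derive_n (fun y => Derive h (f y) * Derive f y) k)); auto.
      intros y Hy. apply (Dn_eqD D); auto. intros z Hz.
      rewrite (Derive_comp h f z). ring. apply (Hh 0%nat); auto; lia. apply (Hf 0%nat); auto; lia.
      apply (Cn_mult D n); auto.
      apply IH; auto. apply Cn_derive; auto. apply (Cn_weaken D (S n)); auto.
      apply Cn_derive; auto. lia.
Qed.

(* Leibniz rule without binomials *)
Fixpoint Lb (n : nat) (u v : nat -> R) : R :=
  match n with
  | O => u O * v O
  | S n => Lb n (fun k => u (S k)) v + Lb n u (fun k => v (S k))
  end.

Lemma Lb_ext n : forall u u' v v', (forall k, u k = u' k) -> (forall k, v k = v' k) ->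
  Lb n u v = Lb n u' v'.
Proof.
  induction n; intros u u' v v' Hu Hv; simpl. rewrite Hu, Hv; auto.
  f_equal; apply IHn; auto.
Qed.

Lemma leibniz D : open D -> forall n f g x, Smooth D f -> Smooth D g -> D x ->
  Derive_n (fun z => f z * g z) n x =
  Lb n (fun k => Derive_n f k x) (fun k => Derive_n g k x).
Proof.
  intros HD n. induction n as [|n IH]; intros f g x Hf Hg Hx.
  - reflexivity.
  - destruct (Cn_mult_aux D HD n f g (Hf n) (Hg n)) as [_ H].
    rewrite H; auto. simpl.
    assert (Hf' : Smooth D (Derive f)) by (intro m; apply Cn_derive; apply Hf).
    assert (Hg' : Smooth D (Derive g)) by (intro m; apply Cn_derive; apply Hg).
    rewrite IH, IH; auto. f_equal; apply Lb_ext; intros; auto; symmetry; apply Dn_S.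
Qed.

Lemma Smooth_derive D f : Smooth D f -> Smooth D (Derive f).
Proof. intros H n; apply Cn_derive, H. Qed.
Lemma Smooth_plus D f g : open D -> Smooth D f -> Smooth D g -> Smooth D (fun z => f z + g z).
Proof. intros; intro n; apply Cn_plus; auto. Qed.
Lemma Smooth_mult D f g : open D -> Smooth D f -> Smooth D g -> Smooth D (fun z => f z * g z).
Proof. intros; intro n; apply Cn_mult; auto. Qed.
Lemma Smooth_ext D u v : open D -> (forall y, D y -> u y = v y) -> Smooth D u -> Smooth D v.
Proof. intros; intro n; apply (Cn_ext D n u); auto. Qed.
Lemma Smooth_comp Dh D h f : open Dh -> open D -> (forall x, D x -> Dh (f x)) ->
  Smooth Dh h -> Smooth D f -> Smooth D (fun x => h (f x)).
Proof. intros; intro n; apply (Cn_comp Dh D); auto. Qed.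

Lemma Dn_plus_smooth D f g : open D -> Smooth D f -> Smooth D g -> forall k y, D y ->
  Derive_n (fun z => f z + g z) k y = Derive_n f k y + Derive_n g k y.
Proof. intros HD Hf Hg k y Hy. apply (Cn_plus_eq D k); auto. Qed.

Lemma tower_Dn D (F : nat -> R -> R) f : open D ->
  (forall y, D y -> f y = F O y) ->
  (forall n y, D y -> is_derive (F n) y (F (S n) y)) ->
  forall n y, D y -> Derive_n f n y = F n y.
Proof.
  intros HD H0 HS n. induction n as [|n IH]; intros y Hy.
  - simpl; auto.
  - simpl. rewrite (Derive_ext_loc _ (F n)).
    + apply is_derive_unique; auto.
    + apply (filter_imp D). exact IH. apply HD; auto.
Qed.

Lemma tower_smooth D (F : nat -> R -> R) f : open D ->
  (forall y, D y -> f y = F O y) ->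
  (forall n y, D y -> is_derive (F n) y (F (S n) y)) -> Smooth D f.
Proof.
  intros HD H0 HS n k x Hk Hx.
  apply (ex_derive_loc D (F k)); auto.
  intros; symmetry; apply (tower_Dn D F); auto.
  eexists; apply HS; auto.
Qed.


Definition constT (c : R) (n : nat) (y : R) : R := match n with O => c | _ => 0 end.
Lemma Smooth_const D c : open D -> Smooth D (fun _ => c).
Proof.
  intros HD. apply (tower_smooth D (constT c)); auto.
  intros n y _. unfold constT; destruct n; (auto_derive; auto; ring).
Qed.
Lemma Dn_const D c : open D -> forall n y, D y -> Derive_n (fun _ => c) n y = constT c n y.
Proof.
  intros HD. apply (tower_Dn D (constT c)); auto.
  intros n y _. unfold constT; destruct n; (auto_derive; auto; ring).
Qed.

Definition linT (a : R) (n : nat) (y : R) : R :=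
  match n with O => a * y | 1%nat => a | _ => 0 end.
Lemma linT_der a n y : is_derive (linT a n) y (linT a (S n) y).
Proof.
  unfold linT; destruct n as [|[|n]].
  - auto_derive; auto; ring.
  - (auto_derive; auto; ring).
  - (auto_derive; auto; ring).
Qed.
Lemma Smooth_lin D a : open D -> Smooth D (fun y => a * y).
Proof. intros HD. apply (tower_smooth D (linT a)); auto. intros; apply linT_der. Qed.
Lemma Dn_lin D a : open D -> forall n y, D y -> Derive_n (fun y => a * y) n y = linT a n y.
Proof. intros HD. apply (tower_Dn D (linT a)); auto. intros; apply linT_der. Qed.

Lemma open_True : open (fun _ : R => True).
Proof. apply open_true. Qed.

Lemma Smooth_exp : Smooth (fun _ => True) exp.
Proof.
  apply (tower_smooth _ (fun _ => exp)); auto. apply open_True.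
  intros n y _. auto_derive; auto; ring.
Qed.

Definition Dpos (y : R) : Prop := 0 < y.
Lemma open_Dpos : open Dpos.
Proof. apply open_gt. Qed.

Definition invT (n : nat) (y : R) : R := (-1) ^ n * INR (fact n) * / y ^ (S n).
Lemma invT_der n y : 0 < y -> is_derive (invT n) y (invT (S n) y).
Proof.
  intros Hy. unfold invT. assert (Hp : forall m, 0 < y ^ m) by (intro; apply pow_lt; lra).
  auto_derive.
  - specialize (Hp (S n)); simpl in Hp; lra.
  - replace (match n with 0%nat => 1 | S _ => INR n + 1 end) with (INR (S n)) by reflexivity.
    rewrite fact_simpl, mult_INR, S_INR. simpl pow. field.
    specialize (Hp n); lra.
Qed.
Lemma Smooth_inv : Smooth Dpos (fun y => / y).
Proof.
  apply (tower_smooth Dpos invT). apply open_Dpos.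
  intros y Hy; unfold invT; simpl; field; unfold Dpos in Hy; lra.
  intros n y Hy; apply invT_der; auto.
Qed.
Definition lnT (n : nat) (y : R) : R := match n with O => ln y | S n => invT n y end.
Lemma Smooth_ln : Smooth Dpos ln.
Proof.
  apply (tower_smooth Dpos lnT). apply open_Dpos. intros; reflexivity.
  intros n y Hy; unfold Dpos in Hy. destruct n; simpl lnT.
  - auto_derive; auto. unfold invT; simpl; field; lra.
  - apply invT_der; auto.
Qed.

Lemma Smooth_expc D F : open D -> Smooth D F -> Smooth D (fun y => exp (F y)).
Proof.
  intros HD HF. apply (Smooth_comp (fun _ => True) D); auto. apply open_True. apply Smooth_exp.
Qed.

Lemma exp_jets D F : open D -> Smooth D F -> forall n x, D x ->
  Derive_n (fun y => exp (F y)) (S n) x =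
  Lb n (fun k => Derive_n F (S k) x) (fun k => Derive_n (fun y => exp (F y)) k x).
Proof.
  intros HD HF n x Hx. rewrite Dn_S.
  rewrite (Dn_eqD D _ (fun y => Derive F y * exp (F y))); auto.
  - rewrite (leibniz D); auto.
    apply Lb_ext; intros; auto. symmetry; apply Dn_S.
    apply Smooth_derive; auto. apply Smooth_expc; auto.
  - intros y Hy. apply is_derive_unique. auto_derive.
    apply (HF 0%nat 0%nat); auto. rewrite Rmult_1_l; reflexivity.
Qed.


Lemma s_double n : s (2 * n) = s n.
Proof. unfold s. rewrite Nnat.Nat2N.inj_double. destruct (N.of_nat n); reflexivity. Qed.

Lemma s_sd n : s (2 * n + 1) = S (s n).
Proof.
  unfold s. replace (2 * n + 1)%nat with (S (2 * n)) by lia.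
  rewrite Nnat.Nat2N.inj_succ, Nnat.Nat2N.inj_double. destruct (N.of_nat n); reflexivity.
Qed.

Lemma even_odd_dec n : exists m, n = (2 * m)%nat \/ n = (2 * m + 1)%nat.
Proof.
  destruct (Nat.Even_or_Odd n) as [[m Hm]|[m Hm]]; exists m; lia.
Qed.

Lemma s_succ_le : forall n, (s (n + 1) <= S (s n))%nat.
Proof.
  intro n. induction n as [n IH] using (well_founded_induction lt_wf).
  destruct (even_odd_dec n) as [m [Hm|Hm]]; subst.
  - rewrite s_sd, s_double. lia.
  - replace (2 * m + 1 + 1)%nat with (2 * (m + 1))%nat by lia.
    rewrite s_double, s_sd. destruct m as [|m].
    + simpl. unfold s. simpl. lia.
    + assert (H := IH (S m) ltac:(lia)). lia.
Qed.

Definition cnt (p : nat -> bool) (N : nat) : nat := length (filter p (seq 0 N)).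

Lemma cnt_S p N : cnt p (S N) = (cnt p N + (if p N then 1 else 0))%nat.
Proof.
  unfold cnt. rewrite seq_S, filter_app, length_app. simpl. destruct (p N); reflexivity.
Qed.

Lemma cnt_split p q r : (forall m, p (2 * m)%nat = q m) -> (forall m, p (2 * m + 1)%nat = r m) ->
  forall M, cnt p (2 * M) = (cnt q M + cnt r M)%nat /\ cnt p (2 * M + 1) = (cnt q (S M) + cnt r M)%nat.
Proof.
  intros Hq Hr M. induction M as [|M [IH1 IH2]].
  - split; [reflexivity|]. unfold cnt; simpl. specialize (Hq 0%nat); simpl in Hq. rewrite Hq.
    destruct (q 0%nat); reflexivity.
  - split.
    + replace (2 * S M)%nat with (S (2 * M + 1)) by lia.
      rewrite cnt_S, IH2, Hr, (cnt_S r). lia.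
    + replace (2 * S M + 1)%nat with (S (2 * S M)) by lia.
      rewrite cnt_S, Hq. replace (2 * S M)%nat with (S (2 * M + 1)) by lia.
      rewrite cnt_S, IH2, Hr, (cnt_S r), (cnt_S q (S M)). lia.
Qed.

Lemma cnt_gen p q r : (forall m, p (2 * m)%nat = q m) -> (forall m, p (2 * m + 1)%nat = r m) ->
  forall N, cnt p N = (cnt q (Nat.div2 (S N)) + cnt r (Nat.div2 N))%nat.
Proof.
  intros Hq Hr N. destruct (even_odd_dec N) as [m [Hm|Hm]]; subst.
  - rewrite Nat.div2_succ_double, Nat.div2_double. apply (cnt_split p q r); auto.
  - replace (S (2 * m + 1)) with (2 * S m)%nat by lia.
    replace (2 * m + 1)%nat with (S (2 * m)) at 2 by lia.
    rewrite Nat.div2_succ_double, Nat.div2_double. apply (cnt_split p q r); auto.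
Qed.

Lemma cnt_const b N : cnt (fun _ => b) N = if b then N else 0%nat.
Proof. induction N; [destruct b; reflexivity|]. rewrite cnt_S, IHN. destruct b; lia. Qed.

Lemma cnt_false p N : (forall n, p n = false) -> cnt p N = 0%nat.
Proof. intros H. induction N; auto. rewrite cnt_S, IHN, H. reflexivity. Qed.

Definition test (j : Z) (t n : nat) : bool :=
  Z.eqb (Z.of_nat (s (n + t)) - Z.of_nat (s n))%Z j.

Lemma count_cnt j t N : count_diff j t N = cnt (test j t) N.
Proof. reflexivity. Qed.

Lemma test_oe j t m : test j (2 * t + 1) (2 * m) = test (j - 1) t m.
Proof.
  unfold test. replace (2 * m + (2 * t + 1))%nat with (2 * (m + t) + 1)%nat by lia.
  rewrite s_sd, s_double.
  destruct (Z.eqb_spec (Z.of_nat (S (s (m + t))) - Z.of_nat (s m)) j);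
  destruct (Z.eqb_spec (Z.of_nat (s (m + t)) - Z.of_nat (s m)) (j - 1)); auto; lia.
Qed.
Lemma test_oo j t m : test j (2 * t + 1) (2 * m + 1) = test (j + 1) (t + 1) m.
Proof.
  unfold test. replace (2 * m + 1 + (2 * t + 1))%nat with (2 * (m + (t + 1)))%nat by lia.
  rewrite s_sd, s_double.
  destruct (Z.eqb_spec (Z.of_nat (s (m + (t + 1))) - Z.of_nat (S (s m))) j);
  destruct (Z.eqb_spec (Z.of_nat (s (m + (t + 1))) - Z.of_nat (s m)) (j + 1)); auto; lia.
Qed.
Lemma test_ee j t m : test j (2 * t) (2 * m) = test j t m.
Proof.
  unfold test. replace (2 * m + 2 * t)%nat with (2 * (m + t))%nat by lia.
  rewrite !s_double. reflexivity.
Qed.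
Lemma test_eo j t m : test j (2 * t) (2 * m + 1) = test j t m.
Proof.
  unfold test. replace (2 * m + 1 + 2 * t)%nat with (2 * (m + t) + 1)%nat by lia.
  rewrite !s_sd.
  destruct (Z.eqb_spec (Z.of_nat (S (s (m + t))) - Z.of_nat (S (s m))) j);
  destruct (Z.eqb_spec (Z.of_nat (s (m + t)) - Z.of_nat (s m)) j); auto; lia.
Qed.

Lemma count_odd j t N : count_diff j (2 * t + 1) N =
  (count_diff (j - 1) t (Nat.div2 (S N)) + count_diff (j + 1) (t + 1) (Nat.div2 N))%nat.
Proof. rewrite !count_cnt. apply cnt_gen; intros; [apply test_oe | apply test_oo]. Qed.

Lemma count_even j t N : count_diff j (2 * t) N =
  (count_diff j t (Nat.div2 (S N)) + count_diff j t (Nat.div2 N))%nat.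
Proof. rewrite !count_cnt. apply cnt_gen; intros; [apply test_ee | apply test_eo]. Qed.

Lemma count_zero j N : count_diff j 0 N = if Z.eqb j 0 then N else 0%nat.
Proof.
  rewrite count_cnt. rewrite <- cnt_const. unfold cnt. f_equal. apply filter_ext.
  intros n. unfold test. rewrite Nat.add_0_r, Z.sub_diag. apply Z.eqb_sym.
Qed.

Lemma count_one_ge2 j N : (2 <= j)%Z -> count_diff j 1 N = 0%nat.
Proof.
  intros Hj. rewrite count_cnt. apply cnt_false. intros n. unfold test.
  pose proof (s_succ_le n). apply Z.eqb_neq. lia.
Qed.

Lemma lim_invN : is_lim_seq (fun N => / INR N) 0.
Proof.
  replace (Finite 0) with (Rbar_inv p_infty) by reflexivity.
  apply is_lim_seq_inv. apply is_lim_seq_INR. discriminate.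
Qed.

Lemma filterlim_phi (phi : nat -> nat) : (forall N, (N <= 2 * phi N + 1)%nat) ->
  filterlim phi eventually eventually.
Proof.
  intros H P [N0 HN0]. exists (2 * N0 + 2)%nat. intros n Hn. apply HN0.
  specialize (H n). lia.
Qed.

Lemma ratio_half (phi : nat -> nat) :
  (forall N, (N <= 2 * phi N + 1)%nat /\ (2 * phi N <= N + 1)%nat) ->
  is_lim_seq (fun N => INR (phi N) / INR N) (1/2).
Proof.
  intros H.
  apply is_lim_seq_le_le_loc with (u := fun N => 1/2 - / INR N) (w := fun N => 1/2 + / INR N).
  - exists 1%nat. intros n Hn. destruct (H n) as [H1 H2].
    assert (Hn' : 0 < INR n) by (apply lt_0_INR; lia).
    apply le_INR in H1, H2. rewrite plus_INR, mult_INR in H1, H2. simpl in H1, H2.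
    split.
    + assert (E : INR (phi n) / INR n - (1/2 - / INR n) = (2 * INR (phi n) - INR n + 2) * / (2 * INR n))
        by (field; lra).
      assert (0 <= (2 * INR (phi n) - INR n + 2) * / (2 * INR n)) by (apply Rle_mult_inv_pos; lra).
      lra.
    + assert (E : 1/2 + / INR n - INR (phi n) / INR n = (INR n + 2 - 2 * INR (phi n)) * / (2 * INR n))
        by (field; lra).
      assert (0 <= (INR n + 2 - 2 * INR (phi n)) * / (2 * INR n)) by (apply Rle_mult_inv_pos; lra).
      lra.
  - replace (1/2) with (1/2 - 0) at 1 by ring.
    apply is_lim_seq_minus'. apply is_lim_seq_const. apply lim_invN.
  - replace (1/2) with (1/2 + 0) at 1 by ring.
    apply is_lim_seq_plus'. apply is_lim_seq_const. apply lim_invN.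
Qed.

Lemma div2_bounds N : (N <= 2 * Nat.div2 N + 1)%nat /\ (2 * Nat.div2 N <= N + 1)%nat.
Proof. pose proof (Nat.div2_odd N). destruct (Nat.odd N); simpl in *; lia. Qed.
Lemma div2S_bounds N : (N <= 2 * Nat.div2 (S N) + 1)%nat /\ (2 * Nat.div2 (S N) <= N + 1)%nat.
Proof. pose proof (Nat.div2_odd (S N)). destruct (Nat.odd (S N)); simpl in *; lia. Qed.

Lemma lim_sub (c phi : nat -> nat) (L : R) :
  (forall N, (N <= 2 * phi N + 1)%nat /\ (2 * phi N <= N + 1)%nat) ->
  is_lim_seq (fun N => INR (c N) / INR N) L ->
  is_lim_seq (fun N => INR (c (phi N)) / INR N) (L / 2).
Proof.
  intros H HL.
  apply is_lim_seq_ext_loc with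
    (u := fun N => (INR (c (phi N)) / INR (phi N)) * (INR (phi N) / INR N)).
  - exists 2%nat. intros n Hn. destruct (H n) as [H1 H2].
    assert (0 < INR (phi n)) by (apply lt_0_INR; lia).
    assert (0 < INR n) by (apply lt_0_INR; lia).
    field; lra.
  - replace (L / 2) with (L * (1/2)) by field.
    apply is_lim_seq_mult'.
    + apply (is_lim_seq_subseq (fun N => INR (c N) / INR N)); auto.
      apply filterlim_phi. intro N; apply H.
    + apply ratio_half; auto.
Qed.

Definition lim_ok (j : Z) (t : nat) (L : R) :=
  is_lim_seq (fun N => INR (count_diff j t N) / INR N) L.

Lemma delta_lim j t L : lim_ok j t L -> delta j t = L.
Proof. intros H. unfold delta. rewrite (is_lim_seq_unique _ _ H). reflexivity. Qed.

Lemma lim_plus_split (c a b phi1 phi2 : nat -> nat) (La Lb : R) :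
  (forall N, c N = (a (phi1 N) + b (phi2 N))%nat) ->
  (forall N, (N <= 2 * phi1 N + 1)%nat /\ (2 * phi1 N <= N + 1)%nat) ->
  (forall N, (N <= 2 * phi2 N + 1)%nat /\ (2 * phi2 N <= N + 1)%nat) ->
  is_lim_seq (fun N => INR (a N) / INR N) La ->
  is_lim_seq (fun N => INR (b N) / INR N) Lb ->
  is_lim_seq (fun N => INR (c N) / INR N) ((La + Lb) / 2).
Proof.
  intros Hc H1 H2 Ha Hb.
  apply is_lim_seq_ext with (u := fun N => INR (a (phi1 N)) / INR N + INR (b (phi2 N)) / INR N).
  - intros n. rewrite Hc, plus_INR. unfold Rdiv. ring.
  - replace ((La + Lb) / 2) with (La / 2 + Lb / 2) by field.
    apply is_lim_seq_plus'. apply (lim_sub a phi1); auto. apply (lim_sub b phi2); auto.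
Qed.

Lemma lim_zero j : lim_ok j 0 (if Z.eqb j 0 then 1 else 0).
Proof.
  unfold lim_ok. destruct (Z.eqb j 0) eqn:E.
  - apply is_lim_seq_ext_loc with (u := fun _ => 1).
    exists 1%nat. intros n Hn. rewrite count_zero, E. field.
    apply not_0_INR; lia. apply is_lim_seq_const.
  - apply is_lim_seq_ext with (u := fun _ => 0).
    intros n. rewrite count_zero, E. simpl. unfold Rdiv; ring. apply is_lim_seq_const.
Qed.

Lemma lim_one_ge2 j : (2 <= j)%Z -> lim_ok j 1 0.
Proof.
  intros Hj. unfold lim_ok. apply is_lim_seq_ext with (u := fun _ => 0).
  intros n. rewrite count_one_ge2; auto. simpl. unfold Rdiv; ring. apply is_lim_seq_const.
Qed.

Lemma count_one j N : count_diff j 1 N =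
  (count_diff (j - 1) 0 (Nat.div2 (S N)) + count_diff (j + 1) 1 (Nat.div2 N))%nat.
Proof. apply (count_odd j 0 N). Qed.

Lemma lim_one k : lim_ok (1 - Z.of_nat k) 1 ((1/2) ^ (S k)).
Proof.
  induction k as [|k IH].
  - unfold lim_ok. simpl Z.of_nat.
    apply is_lim_seq_ext with (u := fun N => INR (Nat.div2 (S N)) / INR N).
    + intros n. rewrite count_one, count_zero, count_one_ge2 by lia. simpl. f_equal. f_equal. lia.
    + replace ((1/2) ^ 1) with (1/2) by ring. apply ratio_half. apply div2S_bounds.
  - unfold lim_ok.
    apply is_lim_seq_ext with (u := fun N => INR (count_diff (1 - Z.of_nat k) 1 (Nat.div2 N)) / INR N).
    + intros n. rewrite (count_one (1 - Z.of_nat (S k)) n), count_zero.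
      replace (1 - Z.of_nat (S k) - 1 =? 0)%Z with false by (symmetry; apply Z.eqb_neq; lia).
      replace (1 - Z.of_nat (S k) + 1)%Z with (1 - Z.of_nat k)%Z by lia. reflexivity.
    + replace ((1/2) ^ S (S k)) with ((1/2) ^ S k / 2) by (simpl; field).
      apply (lim_sub (fun N => count_diff (1 - Z.of_nat k) 1 N)); auto. apply div2_bounds.
Qed.

Lemma lim_exists : forall t j, exists L, lim_ok j t L.
Proof.
  intro t. induction t as [t IH] using (well_founded_induction lt_wf). intro j.
  destruct t as [|[|t']].
  - eexists; apply lim_zero.
  - destruct (Z_le_gt_dec 2 j).
    + exists 0; apply lim_one_ge2; auto.
    + exists ((1/2) ^ S (Z.to_nat (1 - j))).
      replace j with (1 - Z.of_nat (Z.to_nat (1 - j)))%Z at 1 by lia. apply lim_one.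
  - destruct (even_odd_dec (S (S t'))) as [m [Hm|Hm]].
    + rewrite Hm. destruct (IH m ltac:(lia) j) as [L HL].
      exists ((L + L) / 2). unfold lim_ok.
      apply (lim_plus_split _ (count_diff j m) (count_diff j m) (fun N => Nat.div2 (S N)) Nat.div2).
      intros; apply count_even. apply div2S_bounds. apply div2_bounds. apply HL. apply HL.
    + rewrite Hm. destruct (IH m ltac:(lia) (j - 1)%Z) as [L1 HL1].
      destruct (IH (m + 1)%nat ltac:(lia) (j + 1)%Z) as [L2 HL2].
      exists ((L1 + L2) / 2). unfold lim_ok.
      apply (lim_plus_split _ (count_diff (j - 1) m) (count_diff (j + 1) (m + 1))
               (fun N => Nat.div2 (S N)) Nat.div2).
      intros; apply count_odd. apply div2S_bounds. apply div2_bounds. apply HL1. apply HL2.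
Qed.

Lemma delta_even j t : delta j (2 * t) = delta j t.
Proof.
  destruct (lim_exists t j) as [L HL]. rewrite (delta_lim j t L HL).
  apply delta_lim. replace L with ((L + L) / 2) by field. unfold lim_ok.
  apply (lim_plus_split _ (count_diff j t) (count_diff j t) (fun N => Nat.div2 (S N)) Nat.div2).
  intros; apply count_even. apply div2S_bounds. apply div2_bounds. apply HL. apply HL.
Qed.

Lemma delta_odd j t : delta j (2 * t + 1) = (delta (j - 1) t + delta (j + 1) (t + 1)) / 2.
Proof.
  destruct (lim_exists t (j - 1)%Z) as [L1 HL1]. destruct (lim_exists (t + 1) (j + 1)%Z) as [L2 HL2].
  rewrite (delta_lim _ _ L1 HL1), (delta_lim _ _ L2 HL2).
  apply delta_lim. unfold lim_ok.
  apply (lim_plus_split _ (count_diff (j - 1) t) (count_diff (j + 1) (t + 1))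
           (fun N => Nat.div2 (S N)) Nat.div2).
  intros; apply count_odd. apply div2S_bounds. apply div2_bounds. apply HL1. apply HL2.
Qed.

Lemma delta_zero j : delta j 0 = if Z.eqb j 0 then 1 else 0.
Proof. apply delta_lim, lim_zero. Qed.

Lemma delta_one_ge2 j : (2 <= j)%Z -> delta j 1 = 0.
Proof. intros; apply delta_lim, lim_one_ge2; auto. Qed.

Lemma delta_one k : delta (1 - Z.of_nat k) 1 = (1/2) ^ (S k).
Proof. apply delta_lim, lim_one. Qed.

Lemma delta_nonneg j t : 0 <= delta j t.
Proof.
  destruct (lim_exists t j) as [L HL]. rewrite (delta_lim j t L HL).
  assert (H := is_lim_seq_le (fun _ => 0) (fun N => INR (count_diff j t N) / INR N) 0 L).
  simpl in H. apply H; auto. 2: apply is_lim_seq_const.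
  intros n. unfold Rdiv. apply Rmult_le_pos. apply pos_INR.
  destruct n. simpl; rewrite Rinv_0; lra. apply Rlt_le, Rinv_0_lt_compat, lt_0_INR; lia.
Qed.


Lemma exp_le_mono x y : x <= y -> exp x <= exp y.
Proof. intros [H|H]. left; apply exp_increasing; auto. subst; lra. Qed.

Lemma pow_dec r n m : 0 <= r <= 1 -> (n <= m)%nat -> r ^ m <= r ^ n.
Proof.
  intros Hr Hnm. replace m with (n + (m - n))%nat by lia. rewrite pow_add.
  assert (0 <= r ^ n) by (apply pow_le; lra).
  assert (r ^ (m - n) <= 1). { rewrite <- (pow1 (m - n)). apply pow_incr; lra. }
  nra.
Qed.

Lemma pow_shift r n m : 0 < r <= 1 -> (n <= m + 1)%nat -> r ^ m <= / r * r ^ n.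
Proof.
  intros Hr H. assert (r ^ (m + 1) <= r ^ n) by (apply pow_dec; lra || lia).
  rewrite pow_add in H0. simpl in H0.
  assert (E : r ^ m = / r * (r ^ m * (r * 1))) by (field; lra). rewrite E.
  apply Rmult_le_compat_l; auto. left; apply Rinv_0_lt_compat; lra.
Qed.

Definition Bnd (t : nat) := exists C, 0 <= C /\ forall j, delta j t <= C * (/2) ^ (Z.abs_nat j).

Lemma Bnd_all : forall t, Bnd t.
Proof.
  intro t. induction t as [t IH] using (well_founded_induction lt_wf).
  destruct t as [|[|t']].
  - exists 1. split; [lra|]. intro j. rewrite delta_zero.
    destruct (Z.eqb_spec j 0). subst; simpl; lra.
    assert (0 <= (/2) ^ Z.abs_nat j) by (apply pow_le; lra). lra.
  - exists 2. split; [lra|]. intro j.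
    assert (0 <= (/2) ^ Z.abs_nat j) by (apply pow_le; lra).
    destruct (Z_le_gt_dec 2 j).
    + rewrite delta_one_ge2; auto. lra.
    + replace j with (1 - Z.of_nat (Z.to_nat (1 - j)))%Z at 1 by lia. rewrite delta_one.
      replace (1/2) with (/2) by field.
      replace 2 with (/ / 2) at 2 by field.
      apply pow_shift. lra. lia.
  - destruct (even_odd_dec (S (S t'))) as [m [Hm|Hm]]; rewrite Hm.
    + destruct (IH m ltac:(lia)) as [C [HC H]]. exists C. split; auto. intro j.
      rewrite delta_even. apply H.
    + destruct (IH m ltac:(lia)) as [C1 [HC1 H1]]. destruct (IH (m + 1)%nat ltac:(lia)) as [C2 [HC2 H2]].
      exists (C1 + C2). split; [lra|]. intro j. rewrite delta_odd.
      specialize (H1 (j - 1)%Z). specialize (H2 (j + 1)%Z).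
      assert ((/2) ^ Z.abs_nat (j - 1) <= / / 2 * (/2) ^ Z.abs_nat j) by (apply pow_shift; lra || lia).
      assert ((/2) ^ Z.abs_nat (j + 1) <= / / 2 * (/2) ^ Z.abs_nat j) by (apply pow_shift; lra || lia).
      replace (/ / 2) with 2 in * by field.
      assert (C1 * (/2) ^ Z.abs_nat (j - 1) <= C1 * (2 * (/2) ^ Z.abs_nat j)) by (apply Rmult_le_compat_l; auto).
      assert (C2 * (/2) ^ Z.abs_nat (j + 1) <= C2 * (2 * (/2) ^ Z.abs_nat j)) by (apply Rmult_le_compat_l; auto).
      lra.
Qed.

Definition rr : R := exp (1/2) / 2.
Lemma exp_half_lt2 : exp (1/2) < 2.
Proof.
  assert (E : exp (1/2) * exp (1/2) = exp 1) by (rewrite <- exp_plus; f_equal; field).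
  pose proof exp_le_3. pose proof (exp_pos (1/2)). nra.
Qed.
Lemma rr_pos : 0 < rr.
Proof. unfold rr. pose proof (exp_pos (1/2)). lra. Qed.
Lemma rr_lt1 : rr < 1.
Proof. unfold rr. pose proof exp_half_lt2. lra. Qed.

Definition GB (f : Z -> R) := exists C, 0 <= C /\ forall j, Rabs (f j) <= C * rr ^ (Z.abs_nat j).
Definition zs (f : Z -> R) :=
  ex_series (fun n => f (Z.of_nat n)) /\ ex_series (fun n => f (- Z.of_nat (S n))%Z).

Lemma ex_geom C : ex_series (fun n => C * rr ^ n).
Proof.
  apply (ex_series_ext (fun n => scal C (rr ^ n))). intros; reflexivity.
  apply (@ex_series_scal_l R_AbsRing R_NormedModule C (fun n => rr ^ n)). eexists. apply is_series_geom.
  pose proof rr_pos; pose proof rr_lt1. rewrite Rabs_pos_eq; lra.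
Qed.

Lemma GB_zs f : GB f -> zs f.
Proof.
  intros [C [HC H]]. split.
  - apply (@ex_series_le R_AbsRing R_CompleteNormedModule _ (fun n => C * rr ^ n)). intros n. change (norm (f (Z.of_nat n))) with (Rabs (f (Z.of_nat n))).
    rewrite <- (Zabs2Nat.id n) at 2. apply H. apply ex_geom.
  - apply (@ex_series_le R_AbsRing R_CompleteNormedModule _ (fun n => (C * rr) * rr ^ n)). intros n.
    change (norm (f (- Z.of_nat (S n))%Z)) with (Rabs (f (- Z.of_nat (S n))%Z)).
    replace ((C * rr) * rr ^ n) with (C * rr ^ (Z.abs_nat (- Z.of_nat (S n)))).
    apply H. replace (Z.abs_nat (- Z.of_nat (S n))) with (S n) by lia. simpl; ring.
    apply ex_geom.
Qed.

Lemma GB_shift f d : GB f -> (d = 1 \/ d = -1)%Z -> GB (fun j => f (j + d)%Z).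
Proof.
  intros [C [HC H]] Hd. exists (C * / rr). pose proof rr_pos. pose proof rr_lt1.
  split. apply Rmult_le_pos; auto. left; apply Rinv_0_lt_compat; auto.
  intros j. eapply Rle_trans. apply H.
  assert (rr ^ Z.abs_nat (j + d) <= / rr * rr ^ Z.abs_nat j) by (apply pow_shift; lra || lia).
  rewrite Rmult_assoc. apply Rmult_le_compat_l; auto.
Qed.

Lemma GB_plus f g : GB f -> GB g -> GB (fun j => f j + g j).
Proof.
  intros [C1 [HC1 H1]] [C2 [HC2 H2]]. exists (C1 + C2). split. lra. intros j.
  eapply Rle_trans. apply Rabs_triang. specialize (H1 j); specialize (H2 j). lra.
Qed.

Lemma GB_scal c f : GB f -> GB (fun j => c * f j).
Proof.
  intros [C [HC H]]. exists (Rabs c * C). split. apply Rmult_le_pos; auto; apply Rabs_pos.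
  intros j. rewrite Rabs_mult, Rmult_assoc. apply Rmult_le_compat_l. apply Rabs_pos. apply H.
Qed.

Lemma zsum_ext f g : (forall j, f j = g j) -> zsum f = zsum g.
Proof. intros H. unfold zsum. f_equal; apply Series_ext; auto. Qed.

Lemma zsum_plus f g : zs f -> zs g -> zsum (fun j => f j + g j) = zsum f + zsum g.
Proof.
  intros [Hf1 Hf2] [Hg1 Hg2]. unfold zsum. rewrite !Series_plus; auto. ring.
Qed.

Lemma zsum_scal c f : zsum (fun j => c * f j) = c * zsum f.
Proof. unfold zsum. rewrite !Series_scal_l. ring. Qed.

Lemma zsum_shiftm f : zs f -> zsum (fun j => f (j - 1)%Z) = zsum f.
Proof.
  intros [H1 H2]. unfold zsum.
  assert (E1 : Series (fun n => f (Z.of_nat n - 1)%Z) = f (-1)%Z + Series (fun n => f (Z.of_nat n))).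
  { rewrite Series_incr_1. f_equal. apply Series_ext. intros n. f_equal. lia.
    apply ex_series_incr_1. apply (ex_series_ext (fun n => f (Z.of_nat n))); auto.
    intros n; f_equal; lia. }
  assert (E2 : Series (fun n => f (- Z.of_nat (S n))%Z) = f (-1)%Z + Series (fun n => f (- Z.of_nat (S n) - 1)%Z)).
  { rewrite Series_incr_1; auto. f_equal. apply Series_ext. intros n. f_equal. lia. }
  rewrite E1, E2. ring.
Qed.

Lemma zsum_shiftp f : zs f -> zsum (fun j => f (j + 1)%Z) = zsum f.
Proof.
  intros [H1 H2]. unfold zsum.
  assert (E1 : Series (fun n => f (Z.of_nat n)) = f 0%Z + Series (fun n => f (Z.of_nat n + 1)%Z)).
  { rewrite Series_incr_1; auto. f_equal. apply Series_ext. intros n. f_equal. lia. }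
  assert (E2 : Series (fun n => f (- Z.of_nat (S n) + 1)%Z) = f 0%Z + Series (fun n => f (- Z.of_nat (S n))%Z)).
  { rewrite Series_incr_1. f_equal. apply Series_ext. intros n. f_equal. lia.
    apply ex_series_incr_1. apply (ex_series_ext (fun n => f (- Z.of_nat (S n))%Z)); auto.
    intros n; f_equal; lia. }
  rewrite E1, E2. ring.
Qed.

Definition Iv (x : R) : Prop := -1/2 < x /\ x < 1/2.

Definition Hf (t : nat) (x : R) (j : Z) : R := delta j t * exp (IZR j * x).

Lemma exp_pow_nat n a : exp (INR n * a) = exp a ^ n.
Proof.
  induction n. simpl. rewrite Rmult_0_l. apply exp_0.
  rewrite S_INR. replace ((INR n + 1) * a) with (INR n * a + a) by ring.
  rewrite exp_plus, IHn. simpl. ring.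
Qed.

Lemma GB_Hf t x : Iv x -> GB (Hf t x).
Proof.
  intros [Hx1 Hx2]. destruct (Bnd_all t) as [C [HC H]]. exists C. split; auto.
  intros j. unfold Hf. pose proof (delta_nonneg j t). pose proof (exp_pos (IZR j * x)).
  rewrite Rabs_pos_eq by (apply Rmult_le_pos; lra).
  assert (Hj : IZR j * x <= INR (Z.abs_nat j) * (1/2)).
  { rewrite INR_IZR_INZ, Zabs2Nat.id_abs, <- Rabs_Zabs.
    assert (IZR j * x <= Rabs (IZR j * x)) by apply Rle_abs.
    rewrite Rabs_mult in H2. assert (Rabs x <= 1/2) by (apply Rabs_le; lra).
    assert (0 <= Rabs (IZR j)) by apply Rabs_pos. nra. }
  apply exp_le_mono in Hj. rewrite exp_pow_nat in Hj.
  specialize (H j).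
  assert (0 <= (/2) ^ Z.abs_nat j) by (apply pow_le; lra).
  unfold rr. unfold Rdiv at 1. rewrite Rpow_mult_distr.
  apply Rle_trans with (C * (/2) ^ Z.abs_nat j * exp (IZR j * x)).
  apply Rmult_le_compat_r; lra.
  replace (C * (exp (1/2) ^ Z.abs_nat j * (/2) ^ Z.abs_nat j)) with (C * (/2) ^ Z.abs_nat j * exp (1/2) ^ Z.abs_nat j) by ring.
  apply Rmult_le_compat_l; auto. apply Rmult_le_pos; auto.
Qed.

Lemma mgf_Hf t x : mgf t x = zsum (Hf t x).
Proof. reflexivity. Qed.

Lemma mgf_even t x : mgf (2 * t) x = mgf t x.
Proof. unfold mgf. apply zsum_ext. intros j. rewrite delta_even. reflexivity. Qed.

Lemma mgf_odd t x : Iv x ->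
  mgf (2 * t + 1) x = (exp x * mgf t x + exp (- x) * mgf (t + 1) x) / 2.
Proof.
  intros Hx. rewrite !mgf_Hf.
  rewrite (zsum_ext _ (fun j => (/2 * exp x) * Hf t x (j - 1)%Z + (/2 * exp (- x)) * Hf (t + 1) x (j + 1)%Z)).
  - rewrite zsum_plus. rewrite !zsum_scal.
    rewrite (zsum_shiftm (Hf t x)), (zsum_shiftp (Hf (t + 1) x)). field.
    apply GB_zs, GB_Hf; auto. apply GB_zs, GB_Hf; auto.
    apply GB_zs, GB_scal. apply (GB_shift (Hf t x) (-1)%Z). apply GB_Hf; auto. auto.
    apply GB_zs, GB_scal. apply (GB_shift (Hf (t + 1) x) 1%Z). apply GB_Hf; auto. auto.
  - intros j. unfold Hf.
    assert (E1 : exp (IZR (j - 1) * x) = exp (IZR j * x) * exp (- x))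
      by (rewrite <- exp_plus, minus_IZR; f_equal; ring).
    assert (E2 : exp (IZR (j + 1) * x) = exp (IZR j * x) * exp x)
      by (rewrite <- exp_plus, plus_IZR; f_equal; ring).
    rewrite E1, E2, delta_odd, exp_Ropp. field. apply Rgt_not_eq, exp_pos.
Qed.


Lemma open_Iv : open Iv.
Proof. unfold Iv. apply open_and; [apply open_gt | apply open_lt]. Qed.
Lemma Iv0 : Iv 0.
Proof. unfold Iv; lra. Qed.

Lemma Series_zero a : (forall n, a n = 0) -> Series a = 0.
Proof.
  intros H. rewrite (Series_ext a (fun n => 0 * 0)). rewrite Series_scal_l; ring.
  intros; rewrite H; ring.
Qed.

Lemma mgf_zero x : Iv x -> mgf 0 x = 1.
Proof.
  intros Hx. rewrite mgf_Hf. destruct (GB_zs _ (GB_Hf 0 x Hx)) as [H1 H2]. unfold zsum.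
  rewrite Series_incr_1; auto.
  rewrite (Series_zero (fun k => Hf 0 x (Z.of_nat (S k)))).
  rewrite (Series_zero (fun n => Hf 0 x (- Z.of_nat (S n))%Z)).
  unfold Hf. rewrite delta_zero. simpl. rewrite Rmult_0_l, exp_0. ring.
  intros n. unfold Hf. rewrite delta_zero. replace (- Z.of_nat (S n) =? 0)%Z with false by (symmetry; apply Z.eqb_neq; lia). ring.
  intros n. unfold Hf. rewrite delta_zero. replace (Z.of_nat (S n) =? 0)%Z with false by (symmetry; apply Z.eqb_neq; lia). ring.
Qed.

Lemma exp_neg_lt2 x : Iv x -> exp (- x) < 2.
Proof.
  intros [H1 H2]. pose proof exp_half_lt2.
  assert (exp (- x) < exp (1/2)) by (apply exp_increasing; lra). lra.
Qed.

Lemma mgf_one x : Iv x -> mgf 1 x = exp x * / (2 - exp (- x)).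
Proof.
  intros Hx. pose proof (mgf_odd 0 x Hx) as H. change (2 * 0 + 1)%nat with 1%nat in H.
  change (0 + 1)%nat with 1%nat in H. rewrite mgf_zero in H; auto.
  pose proof (exp_neg_lt2 x Hx). apply (Rmult_eq_reg_r (2 - exp (- x))). 2: lra.
  field_simplify; [|lra]. lra.
Qed.

Lemma Smooth_id D : open D -> Smooth D (fun y => y).
Proof. intros HD. apply (Smooth_ext D (fun y => 1 * y)); auto. intros; ring. apply Smooth_lin; auto. Qed.

Lemma Smooth_one : Smooth Iv (fun y => exp y * / (2 - exp (- y))).
Proof.
  pose proof open_Iv as HO.
  apply Smooth_mult; auto.
  - apply (Smooth_expc Iv (fun y => y)); auto. apply Smooth_id; auto.
  - apply (Smooth_comp Dpos Iv (fun y => / y) (fun y => 2 - exp (- y))); auto.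
    apply open_Dpos. intros x Hx. unfold Dpos. pose proof (exp_neg_lt2 x Hx). lra.
    apply Smooth_inv.
    apply (Smooth_ext Iv (fun y => 2 + -1 * exp (-1 * y))); auto.
    intros y _. replace (-1 * y) with (- y) by ring. ring.
    apply Smooth_plus; auto. apply Smooth_const; auto.
    apply Smooth_mult; auto. apply Smooth_const; auto.
    apply Smooth_expc; auto. apply Smooth_lin; auto.
Qed.

Definition Pm (t : nat) := Smooth Iv (mgf t) /\ (forall x, Iv x -> 0 < mgf t x) /\ mgf t 0 = 1.

Lemma Pm_all : forall t, Pm t.
Proof.
  pose proof open_Iv as HO.
  intro t. induction t as [t IH] using (well_founded_induction lt_wf).
  destruct t as [|[|t']].
  - split; [|split].
    + apply (Smooth_ext Iv (fun _ => 1)). exact HO. intros; symmetry; apply mgf_zero; assumption.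
      apply Smooth_const; exact HO.
    + intros; rewrite mgf_zero by assumption; lra.
    + apply mgf_zero, Iv0.
  - split; [|split].
    + apply (Smooth_ext Iv (fun y => exp y * / (2 - exp (- y)))). exact HO.
      intros; symmetry; apply mgf_one; assumption. apply Smooth_one.
    + intros x Hx. rewrite mgf_one by assumption. pose proof (exp_neg_lt2 x Hx).
      apply Rmult_lt_0_compat. apply exp_pos. apply Rinv_0_lt_compat; lra.
    + rewrite mgf_one by apply Iv0. rewrite Ropp_0, exp_0. field.
  - destruct (even_odd_dec (S (S t'))) as [m [Hm|Hm]]; rewrite Hm.
    + destruct (IH m ltac:(lia)) as [H1 [H2 H3]].
      split; [|split].
      * apply (Smooth_ext Iv (mgf m)). exact HO. intros; symmetry; apply mgf_even. exact H1.
      * intros; rewrite mgf_even; apply H2; assumption.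
      * rewrite mgf_even; exact H3.
    + destruct (IH m ltac:(lia)) as [H1 [H2 H3]].
      destruct (IH (m + 1)%nat ltac:(lia)) as [K1 [K2 K3]].
      split; [|split].
      * apply (Smooth_ext Iv (fun y => /2 * (exp y * mgf m y) + /2 * (exp (-1 * y) * mgf (m + 1) y))).
        exact HO.
        intros y Hy. rewrite mgf_odd by assumption. replace (-1 * y) with (- y) by ring. field.
        apply Smooth_plus. exact HO.
        apply Smooth_mult. exact HO. apply Smooth_const; exact HO.
        apply Smooth_mult. exact HO. apply (Smooth_expc Iv (fun y => y)). exact HO. apply Smooth_id; exact HO.
        exact H1.
        apply Smooth_mult. exact HO. apply Smooth_const; exact HO.
        apply Smooth_mult. exact HO. apply Smooth_expc. exact HO. apply Smooth_lin; exact HO.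
        exact K1.
      * intros x Hx. rewrite mgf_odd by assumption. specialize (H2 x Hx). specialize (K2 x Hx).
        pose proof (exp_pos x). pose proof (exp_pos (- x)).
        assert (0 < exp x * mgf m x) by (apply Rmult_lt_0_compat; assumption).
        assert (0 < exp (- x) * mgf (m + 1) x) by (apply Rmult_lt_0_compat; assumption).
        lra.
      * rewrite mgf_odd by apply Iv0. rewrite H3, K3, Ropp_0, exp_0. field.
Qed.

Definition G (t : nat) (x : R) : R := ln (mgf t x).

Lemma kappa_G k t : kappa k t = Derive_n (G t) k 0.
Proof. reflexivity. Qed.

Lemma Smooth_G t : Smooth Iv (G t).
Proof.
  destruct (Pm_all t) as [H1 [H2 H3]]. unfold G.
  apply (Smooth_comp Dpos Iv ln (mgf t)); auto. apply open_Dpos. apply open_Iv.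
  apply Smooth_ln.
Qed.

Lemma G0 t : G t 0 = 0.
Proof. unfold G. destruct (Pm_all t) as [_ [_ H]]. rewrite H. apply ln_1. Qed.

Definition Af (a : R) (t : nat) (y : R) : R := a * y + G t y.

Lemma Smooth_Af a t : Smooth Iv (Af a t).
Proof. unfold Af. apply Smooth_plus. apply open_Iv. apply Smooth_lin, open_Iv. apply Smooth_G. Qed.

Lemma Af_jets a t k : Derive_n (Af a t) k 0 = linT a k 0 + Derive_n (G t) k 0.
Proof.
  unfold Af. rewrite (Dn_plus_smooth Iv); auto. rewrite (Dn_lin Iv); auto.
  apply open_Iv. apply Iv0. apply open_Iv. apply Smooth_lin, open_Iv. apply Smooth_G. apply Iv0.
Qed.

Lemma rel_exp t k :
  2 * Derive_n (fun y => exp (G (2 * t + 1) y)) k 0 =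
  Derive_n (fun y => exp (Af 1 t y)) k 0 + Derive_n (fun y => exp (Af (-1) (t + 1) y)) k 0.
Proof.
  pose proof open_Iv as HO.
  rewrite <- Derive_n_scal_l.
  rewrite (Dn_eqD Iv (fun y => 2 * exp (G (2 * t + 1) y))
             (fun y => exp (Af 1 t y) + exp (Af (-1) (t + 1) y))).
  - apply (Dn_plus_smooth Iv). exact HO. apply Smooth_expc. exact HO. apply Smooth_Af.
    apply Smooth_expc. exact HO. apply Smooth_Af. apply Iv0.
  - exact HO.
  - intros y Hy. unfold Af, G.
    destruct (Pm_all t) as [_ [P1 _]]. destruct (Pm_all (t + 1)) as [_ [P2 _]].
    destruct (Pm_all (2 * t + 1)) as [_ [P3 _]].
    rewrite !exp_plus, !exp_ln by auto. rewrite mgf_odd by assumption.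
    replace (1 * y) with y by ring. replace (-1 * y) with (- y) by ring. field.
  - apply Iv0.
Qed.

Lemma Dn0 (f : R -> R) x : Derive_n f 0 x = f x.
Proof. reflexivity. Qed.

Lemma exp_jets5 F : Smooth Iv F -> F 0 = 0 ->
  (Derive_n (fun y => exp (F y)) 1 0 = Derive_n F 1 0) /\
  (Derive_n (fun y => exp (F y)) 2 0 = Derive_n F 2 0 + Derive_n F 1 0 ^ 2) /\
  (Derive_n (fun y => exp (F y)) 3 0 =
    Derive_n F 3 0 + 3 * Derive_n F 1 0 * Derive_n F 2 0 + Derive_n F 1 0 ^ 3) /\
  (Derive_n (fun y => exp (F y)) 4 0 =
    Derive_n F 4 0 + 4 * Derive_n F 1 0 * Derive_n F 3 0 + 3 * Derive_n F 2 0 ^ 2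
    + 6 * Derive_n F 1 0 ^ 2 * Derive_n F 2 0 + Derive_n F 1 0 ^ 4) /\
  (Derive_n (fun y => exp (F y)) 5 0 =
    Derive_n F 5 0 + 5 * Derive_n F 1 0 * Derive_n F 4 0 + 10 * Derive_n F 2 0 * Derive_n F 3 0
    + 10 * Derive_n F 1 0 ^ 2 * Derive_n F 3 0 + 15 * Derive_n F 1 0 * Derive_n F 2 0 ^ 2
    + 10 * Derive_n F 1 0 ^ 3 * Derive_n F 2 0 + Derive_n F 1 0 ^ 5).
Proof.
  intros HF H0.
  pose proof (exp_jets Iv F open_Iv HF) as EJ.
  assert (E0 : Derive_n (fun y => exp (F y)) 0 0 = 1) by (rewrite Dn0, H0; apply exp_0).
  assert (E1 : Derive_n (fun y => exp (F y)) 1 0 = Derive_n F 1 0).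
  { rewrite (EJ 0%nat 0 Iv0). cbn [Lb]. rewrite E0. ring. }
  assert (E2 : Derive_n (fun y => exp (F y)) 2 0 = Derive_n F 2 0 + Derive_n F 1 0 ^ 2).
  { rewrite (EJ 1%nat 0 Iv0). cbn [Lb]. rewrite E0, E1. ring. }
  assert (E3 : Derive_n (fun y => exp (F y)) 3 0 =
    Derive_n F 3 0 + 3 * Derive_n F 1 0 * Derive_n F 2 0 + Derive_n F 1 0 ^ 3).
  { rewrite (EJ 2%nat 0 Iv0). cbn [Lb]. rewrite E0, E1, E2. ring. }
  assert (E4 : Derive_n (fun y => exp (F y)) 4 0 =
    Derive_n F 4 0 + 4 * Derive_n F 1 0 * Derive_n F 3 0 + 3 * Derive_n F 2 0 ^ 2
    + 6 * Derive_n F 1 0 ^ 2 * Derive_n F 2 0 + Derive_n F 1 0 ^ 4).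
  { rewrite (EJ 3%nat 0 Iv0). cbn [Lb]. rewrite E0, E1, E2, E3. ring. }
  repeat split; auto.
  rewrite (EJ 4%nat 0 Iv0). cbn [Lb]. rewrite E0, E1, E2, E3, E4. ring.
Qed.


Lemma Af0 a t : Af a t 0 = 0.
Proof. unfold Af. rewrite G0. ring. Qed.

Lemma rels t :
  let a k := kappa k t in let b k := kappa k (t + 1) in let c k := kappa k (2 * t + 1) in
  (2 * c 1%nat = (1 + a 1%nat) + (-1 + b 1%nat)) /\
  (2 * (c 2%nat + c 1%nat ^ 2) = (a 2%nat + (1 + a 1%nat) ^ 2) + (b 2%nat + (-1 + b 1%nat) ^ 2)) /\
  (2 * (c 3%nat + 3 * c 1%nat * c 2%nat + c 1%nat ^ 3) =
     (a 3%nat + 3 * (1 + a 1%nat) * a 2%nat + (1 + a 1%nat) ^ 3) +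
     (b 3%nat + 3 * (-1 + b 1%nat) * b 2%nat + (-1 + b 1%nat) ^ 3)) /\
  (2 * (c 4%nat + 4 * c 1%nat * c 3%nat + 3 * c 2%nat ^ 2 + 6 * c 1%nat ^ 2 * c 2%nat + c 1%nat ^ 4) =
     (a 4%nat + 4 * (1 + a 1%nat) * a 3%nat + 3 * a 2%nat ^ 2 + 6 * (1 + a 1%nat) ^ 2 * a 2%nat + (1 + a 1%nat) ^ 4) +
     (b 4%nat + 4 * (-1 + b 1%nat) * b 3%nat + 3 * b 2%nat ^ 2 + 6 * (-1 + b 1%nat) ^ 2 * b 2%nat + (-1 + b 1%nat) ^ 4)) /\
  (2 * (c 5%nat + 5 * c 1%nat * c 4%nat + 10 * c 2%nat * c 3%nat + 10 * c 1%nat ^ 2 * c 3%nat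
        + 15 * c 1%nat * c 2%nat ^ 2 + 10 * c 1%nat ^ 3 * c 2%nat + c 1%nat ^ 5) =
     (a 5%nat + 5 * (1 + a 1%nat) * a 4%nat + 10 * a 2%nat * a 3%nat + 10 * (1 + a 1%nat) ^ 2 * a 3%nat
        + 15 * (1 + a 1%nat) * a 2%nat ^ 2 + 10 * (1 + a 1%nat) ^ 3 * a 2%nat + (1 + a 1%nat) ^ 5) +
     (b 5%nat + 5 * (-1 + b 1%nat) * b 4%nat + 10 * b 2%nat * b 3%nat + 10 * (-1 + b 1%nat) ^ 2 * b 3%nat
        + 15 * (-1 + b 1%nat) * b 2%nat ^ 2 + 10 * (-1 + b 1%nat) ^ 3 * b 2%nat + (-1 + b 1%nat) ^ 5)).
Proof.
  intros a b c.
  destruct (exp_jets5 (G (2 * t + 1)) (Smooth_G _) (G0 _)) as [C1 [C2 [C3 [C4 C5]]]].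
  destruct (exp_jets5 (Af 1 t) (Smooth_Af _ _) (Af0 _ _)) as [A1 [A2 [A3 [A4 A5]]]].
  destruct (exp_jets5 (Af (-1) (t + 1)) (Smooth_Af _ _) (Af0 _ _)) as [B1 [B2 [B3 [B4 B5]]]].
  repeat rewrite Af_jets in A1. repeat rewrite Af_jets in A2. repeat rewrite Af_jets in A3.
  repeat rewrite Af_jets in A4. repeat rewrite Af_jets in A5.
  repeat rewrite Af_jets in B1. repeat rewrite Af_jets in B2. repeat rewrite Af_jets in B3.
  repeat rewrite Af_jets in B4. repeat rewrite Af_jets in B5.
  cbn [linT] in A1, A2, A3, A4, A5, B1, B2, B3, B4, B5.
  pose proof (rel_exp t 1) as R1. pose proof (rel_exp t 2) as R2. pose proof (rel_exp t 3) as R3.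
  pose proof (rel_exp t 4) as R4. pose proof (rel_exp t 5) as R5.
  rewrite C1, A1, B1 in R1. rewrite C2, A2, B2 in R2. rewrite C3, A3, B3 in R3.
  rewrite C4, A4, B4 in R4. rewrite C5, A5, B5 in R5.
  unfold a, b, c. rewrite !kappa_G.
  repeat split.
  - rewrite R1. ring.
  - rewrite R2. ring.
  - rewrite R3. ring.
  - rewrite R4. ring.
  - rewrite R5. ring.
Qed.

Lemma kappa_even k t : kappa k (2 * t) = kappa k t.
Proof.
  unfold kappa.
  replace (fun x => ln (mgf (2 * t) x)) with (fun x => ln (mgf t x)); auto.
  apply functional_extensionality; intros x. rewrite mgf_even. reflexivity.
Qed.

Lemma kappa_zero k : kappa k 0 = 0.
Proof.
  rewrite kappa_G. rewrite (Dn_eqD Iv (G 0) (fun _ => 0)).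
  rewrite (Dn_const Iv). destruct k; reflexivity. apply open_Iv. apply Iv0.
  apply open_Iv. intros y Hy. unfold G. rewrite mgf_zero; auto. apply ln_1. apply Iv0.
Qed.

Lemma kappa1_zero : forall t, kappa 1 t = 0.
Proof.
  intro t. induction t as [t IH] using (well_founded_induction lt_wf).
  destruct t as [|[|t']].
  - apply kappa_zero.
  - destruct (rels 0) as [R _]. cbv beta in R. change (2 * 0 + 1)%nat with 1%nat in R.
    change (0 + 1)%nat with 1%nat in R. rewrite kappa_zero in R. lra.
  - destruct (even_odd_dec (S (S t'))) as [m [Hm|Hm]]; rewrite Hm.
    + rewrite kappa_even. apply IH; lia.
    + destruct (rels m) as [R _]. cbv beta in R. rewrite (IH m), (IH (m + 1)%nat) in R by lia. lra.
Qed.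

Theorem lemma2p1 :
  (forall t : nat,
    kappa 2 (2 * t + 1) = (kappa 2 t + kappa 2 (t + 1)) / 2 + 1 /\
    kappa 3 (2 * t + 1) = (kappa 3 t + kappa 3 (t + 1)) / 2
                          + 3 / 2 * (kappa 2 t - kappa 2 (t + 1)) /\
    kappa 4 (2 * t + 1) = (kappa 4 t + kappa 4 (t + 1)) / 2
                          + 2 * (kappa 3 t - kappa 3 (t + 1))
                          + 3 / 4 * (kappa 2 t - kappa 2 (t + 1)) ^ 2 - 2 /\
    kappa 5 (2 * t + 1) = (kappa 5 t + kappa 5 (t + 1)) / 2
                          + 5 / 2 * (kappa 4 t - kappa 4 (t + 1))
                          + 5 / 2 * (kappa 2 t - kappa 2 (t + 1))
                                  * (kappa 3 t - kappa 3 (t + 1))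
                          - 10 * (kappa 2 t - kappa 2 (t + 1))) /\
  kappa 2 1 = 2 /\ kappa 3 1 = -6 /\ kappa 4 1 = 26 /\ kappa 5 1 = -150.
Proof.
  assert (Main : forall t : nat,
    kappa 2 (2 * t + 1) = (kappa 2 t + kappa 2 (t + 1)) / 2 + 1 /\
    kappa 3 (2 * t + 1) = (kappa 3 t + kappa 3 (t + 1)) / 2
                          + 3 / 2 * (kappa 2 t - kappa 2 (t + 1)) /\
    kappa 4 (2 * t + 1) = (kappa 4 t + kappa 4 (t + 1)) / 2
                          + 2 * (kappa 3 t - kappa 3 (t + 1))
                          + 3 / 4 * (kappa 2 t - kappa 2 (t + 1)) ^ 2 - 2 /\
    kappa 5 (2 * t + 1) = (kappa 5 t + kappa 5 (t + 1)) / 2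
                          + 5 / 2 * (kappa 4 t - kappa 4 (t + 1))
                          + 5 / 2 * (kappa 2 t - kappa 2 (t + 1))
                                  * (kappa 3 t - kappa 3 (t + 1))
                          - 10 * (kappa 2 t - kappa 2 (t + 1))).
  { intro t. destruct (rels t) as [R1 [R2 [R3 [R4 R5]]]]. cbv beta in R1, R2, R3, R4, R5.
    rewrite !kappa1_zero in R1, R2, R3, R4, R5.
    set (a2 := kappa 2 t) in *. set (a3 := kappa 3 t) in *. set (a4 := kappa 4 t) in *.
    set (a5 := kappa 5 t) in *.
    set (b2 := kappa 2 (t + 1)) in *. set (b3 := kappa 3 (t + 1)) in *. set (b4 := kappa 4 (t + 1)) in *.
    set (b5 := kappa 5 (t + 1)) in *.
    set (c2 := kappa 2 (2 * t + 1)) in *. set (c3 := kappa 3 (2 * t + 1)) in *.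
    set (c4 := kappa 4 (2 * t + 1)) in *. set (c5 := kappa 5 (2 * t + 1)) in *.
    assert (H2 : c2 = (a2 + b2) / 2 + 1) by lra.
    rewrite H2 in R3, R4, R5.
    assert (H3 : c3 = (a3 + b3) / 2 + 3 / 2 * (a2 - b2)) by lra.
    rewrite H3 in R4, R5.
    assert (H4 : c4 = (a4 + b4) / 2 + 2 * (a3 - b3) + 3 / 4 * (a2 - b2) ^ 2 - 2) by lra.
    rewrite H4 in R5.
    assert (H5 : c5 = (a5 + b5) / 2 + 5 / 2 * (a4 - b4) + 5 / 2 * (a2 - b2) * (a3 - b3) - 10 * (a2 - b2)) by lra.
    repeat split; assumption. }
  split; [exact Main|].
  destruct (Main 0%nat) as [H2 [H3 [H4 H5]]].
  change (2 * 0 + 1)%nat with 1%nat in H2, H3, H4, H5.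
  change (0 + 1)%nat with 1%nat in H2, H3, H4, H5.
  repeat rewrite kappa_zero in H2. repeat rewrite kappa_zero in H3. repeat rewrite kappa_zero in H4. repeat rewrite kappa_zero in H5.
  assert (K2 : kappa 2 1 = 2) by lra. rewrite K2 in H3, H4, H5.
  assert (K3 : kappa 3 1 = -6) by lra. rewrite K3 in H4, H5.
  assert (K4 : kappa 4 1 = 26) by lra. rewrite K4 in H5.
  assert (K5 : kappa 5 1 = -150) by lra.
  repeat split; assumption.
Qed.
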